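(* Under the assumptions below, the eigenvalues $\widetilde{\lambda}_n$ of the differential operator $\mathbf{L}$ associated with the polynomials $q_n$ orthonormal with respect to the discrete Sobolev inner product $(f,g)_S$ satisfy $$\lim_{n\to+\infty}\frac{\widetilde{\lambda}_n}{n^{2(aj+b)+3}}=\frac{2\gamma MC_j^2}{(2(aj+b)+3)(2(aj+b)+1)}\quad \text{if } \gamma\neq0,$$ $$\lim_{n\to+\infty}\frac{\widetilde{\lambda}_n}{n^{2(aj+b+1)}}=\frac{\delta MC_j^2}{2(aj+b+1)(2(aj+b)+1)}\quad \text{if } \gamma=0.$$
   Context: Let $\mu$ be a classical nonsymmetric measure on the real line with $d\mu(x)=w(x)dx$ (Jacobi weight $(1-x)^{\alpha}(1+x)^{\beta}$ on $(-1,1)$ with $c\in\{-1,1\}$, or Laguerre weight $x^{\alpha}e^{-x}$ on $(0,\infty)$ with $c=0$), and consider the discrete Sobolev inner product $(f,g)_S=\int f(x)g(x)\,d\mu+Mf^{(j)}(c)g^{(j)}(c)$ with $j\in\mathbb{N}\cup\{0\}$ and $M>0$. Let $\{p_n\}_{n\ge0}$ be the orthonormal polynomials with respect to $\mu$, eigenfunctions of the operator $\mathbf{B}=\sigma(x)\mathcal{D}^2+\tau(x)\mathcal{D}$ with eigenvalues $\lambda_n$, and let $\{q_n\}_{n\ge0}$ be the orthonormal polynomials with respect to $(f,g)_S$, which are eigenfunctions of a differential operator $\mathbf{L}=\sum_{i\ge1}r_i(x)\mathcal{D}^i$ ($\deg r_i\le i$) with eigenvalues $\widetilde{\lambda}_n=\lambda_n+M\alpha_n$,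 where $\alpha_i=0$ for $i\in\{0,1,\dots,j\}$ and $\alpha_n=\sum_{i=j+1}^n(\lambda_i-\lambda_{i-1})K_{i-1}^{(j,j)}(c,c)$ for $n\ge j+1$, with $K_n^{(r,s)}(x,y)=\sum_{i=0}^np_i^{(r)}(x)p_i^{(s)}(y)$. Assume $p_n^{(k)}(c)\approx C_k(-1)^n n^{ak+b}$ for $0\le k\le n$ (where $a_n\approx b_n$ means $a_n/b_n\to1$), with $C_k$ independent of $n$ and $2(ak+b)+1>0$, and assume $\lambda_n=\gamma n^2+\delta n$ with $\gamma,\delta\in\mathbb{R}$. *)

(* Defs.v *)
From HB Require Import structures.
From mathcomp Require Import all_boot all_order all_algebra.
From mathcomp Require Import all_classical all_reals all_analysis.
Set Implicit Arguments. Unset Strict Implicit. Unset Printing Implicit Defensive.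
Import Order.TTheory GRing.Theory Num.Theory.
Import numFieldNormedType.Exports.
Local Open Scope classical_set_scope.
Local Open Scope ring_scope.

(* The classical nonsymmetric setting: weight w on the support D, the
   coefficients sigma, tau of B = sigma D^2 + tau D, and the point c. *)
Definition classical_setting (R : realType) (w : R -> R) (D : set R)
  (sigma tau : {poly R}) (c : R) : Prop :=
  (exists al be : R, -1 < al /\ -1 < be /\
     D = (`]-1, 1[%classic) /\
     w = (fun x => ((1 - x) `^ al) * ((1 + x) `^ be)) /\
     sigma = 1 - 'X^2 /\
     tau = (be - al)%:P - (al + be + 2)%:P * 'X /\
     (c = 1 \/ c = -1))
  \/
  (exists al : R, -1 < al /\
     D = (`]0, +oo[%classic) /\
     w = (fun x => (x `^ al) * expR (- x)) /\
     sigma = 'X /\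
     tau = (al + 1)%:P - 'X /\
     c = 0).

Definition orthonormal_family (R : realType) (w : R -> R) (D : set R)
  (p : nat -> {poly R}) : Prop :=
  (forall n, size (p n) = n.+1) /\
  (forall m n, (\int[@lebesgue_measure R]_(x in D)
                   ((p m).[x] * (p n).[x] * w x)%:E = ((m == n)%:R)%:E)%E).

Definition asymp_eq (R : realType) (u v : nat -> R) : Prop :=
  (fun n => u n / v n) @ \oo --> (1 : R).

Definition Kjj (R : realType) (p : nat -> {poly R}) (j : nat) (c : R) (n : nat) : R :=
  \sum_(i < n.+1) ((p i)^`(j)).[c] ^+ 2.

Definition alphaS (R : realType) (p : nat -> {poly R}) (lam : nat -> R)
  (j : nat) (c : R) (n : nat) : R :=
  if (n <= j)%N then 0
  else \sum_(j.+1 <= i < n.+1) (lam i - lam i.-1) * Kjj p j c i.-1.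

Definition lambda_tilde (R : realType) (p : nat -> {poly R}) (lam : nat -> R)
  (M : R) (j : nat) (c : R) (n : nat) : R :=
  lam n + M * alphaS p lam j c n.

(* Main.v *)
Require Import Defs.
From HB Require Import structures.
From mathcomp Require Import all_boot all_order all_algebra.
From mathcomp Require Import all_classical all_reals all_analysis.
From mathcomp Require Import ring lra.
Import Order.TTheory GRing.Theory Num.Theory.
Import numFieldNormedType.Exports.
Local Open Scope classical_set_scope.
Local Open Scope ring_scope.

Section S.
Variable R : realType.

Lemma harm_dnbhs : (@harmonic R) @ \oo --> (0:R)^'.
Proof.
move=> A /= HA.
have H1 := cvg_harmonic HA.
apply: (@filterS _ _ _ (preimage (@harmonic R) (fun x => x != 0 -> A x))) H1.
by move=> n /= /(_ (lt0r_neq0 (harmonic_gt0 n))).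
Qed.

Lemma harm_right : (@harmonic R) @ \oo --> (0:R)^'+.
Proof.
move=> A /= HA.
have H1 := cvg_harmonic HA.
apply: (@filterS _ _ _ (preimage (@harmonic R) (fun x => 0 < x -> A x))) H1.
by move=> n /= /(_ (harmonic_gt0 n)).
Qed.

Lemma L1 (q : R) : (fun n => (n.+1)%:R * ((1 + (n.+1)%:R^-1) `^ q - 1)) @ \oo --> q.
Proof.
have hd := @is_derive1_powR R q 1 ltr01.
have hc := @ex_derive _ _ _ _ _ _ _ hd.
have hv := @derive_val _ _ _ _ _ _ _ hd.
rewrite powR1 mulr1 in hv.
rewrite /derivable in hc.
have := cvg_comp _ _ harm_dnbhs hc.
rewrite -/(derive _ _ _) hv.
apply: cvg_trans; apply: near_eq_cvg; near=> n => /=.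
rewrite invrK /= [_ *: 1]mulr1 addrC powR1 /GRing.scale /=.
by rewrite addrC [_ + 1]addrC.
Unshelve. end_near. Qed.
Lemma stolz (a b : nat -> R) (l : R) : (forall n, 0 <= b n) -> (forall n, b n < b n.+1) ->
  (fun n => (b n)^-1) @ \oo --> (0:R) ->
  (fun n => (a n.+1 - a n)/(b n.+1 - b n)) @ \oo --> l ->
  (fun n => a n / b n) @ \oo --> l.
Proof.
move=> b0 bi binv Hd.
apply/cvgrPdist_le => e e0.
have e20 : 0 < e/2 by rewrite divr_gt0.
move/cvgrPdist_le : Hd => /(_ _ e20) [N _ HN].
have key : forall n, (N <= n)%N ->
  `|(a n - a N) - l * (b n - b N)| <= e/2 * (b n - b N).
  elim=> [|n IH]; first by rewrite leqn0 => /eqP ->; rewrite !subrr mulr0 subrr normr0 mulr0.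
  rewrite leq_eqVlt => /orP [/eqP ->|]; first by rewrite !subrr mulr0 subrr normr0 mulr0.
  rewrite ltnS => Hn; have {}IH := IH Hn; have H1 := HN n Hn.
  have hb : 0 < b n.+1 - b n by rewrite subr_gt0.
  set d := b n.+1 - b n in hb H1 *.
  have -> : a n.+1 - a N - l * (b n.+1 - b N) =
    (a n - a N - l * (b n - b N)) + d * ((a n.+1 - a n) / d - l).
    have hd : d * ((a n.+1 - a n) / d) = a n.+1 - a n by rewrite mulrCA divff ?lt0r_neq0 // mulr1.
    rewrite [d * (_ - l)]mulrBr hd /d; ring.
  apply: (le_trans (ler_normD _ _)).
  rewrite normrM gtr0_norm //.
  have -> : e / 2 * (b n.+1 - b N) = e/2 * (b n - b N) + d * (e/2) by rewrite /d; ring.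
  by apply: lerD => //; rewrite ler_pM2l // distrC.
set K := `|a N - l * b N|.
have K0 : 0 <= K by exact: normr_ge0.
have eK : 0 < e/2/(K+1) by rewrite divr_gt0 // ltr_wpDl.
move/cvgrPdist_le : binv => /(_ _ eK) [M _ HM].
have bpos : forall n, 0 < b n.+1.
  elim=> [|n IH]; first exact: le_lt_trans (b0 0) (bi 0).
  exact: lt_trans IH (bi _).
near=> n.
have hN : (N <= n)%N by near: n; exact: nbhs_infty_ge.
have hM : (M <= n)%N by near: n; exact: nbhs_infty_ge.
have h1 : (1 <= n)%N by near: n; exact: nbhs_infty_ge.
have bp : 0 < b n by rewrite -(prednK h1); exact: bpos.
have hK : K + 1 <= e / 2 * b n.
  have := HM n hM; rewrite /= sub0r normrN ger0_norm; last by rewrite invr_ge0 ltW.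
  rewrite -div1r ler_pdivrMr // mulrAC ler_pdivlMr ?ltr_wpDl //.
  by rewrite mul1r.
have hA := key n hN.
have -> : l - a n / b n = - ((a n - a N - l * (b n - b N)) + (a N - l * b N)) / b n.
  by field; rewrite lt0r_neq0.
rewrite normrM normrN normfV (gtr0_norm bp) ler_pdivrMr //.
apply: le_trans (ler_normD _ _) _.
rewrite -/K.
have := b0 N.
nra.
Unshelve. all: end_near. Qed.

Lemma inv_cvg0 : (fun n : nat => (n%:R : R)^-1) @ \oo --> (0:R).
Proof. by rewrite -cvg_shiftS; exact: cvg_harmonic. Qed.

Lemma L2 (q : R) : (fun n => (n.+1%:R `^ q - n%:R `^ q) / n%:R `^ (q - 1)) @ \oo --> q.
Proof.
rewrite -cvg_shiftS; apply: cvg_trans (L1 q); apply: near_eq_cvg; near=> n => /=.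
set m : R := n.+1%:R.
have m0 : 0 < m by rewrite /m ltr0Sn.
have -> : n.+2%:R = m * (1 + m^-1) by rewrite mulrDr mulr1 divff ?lt0r_neq0 // /m -natr1.
rewrite powRM; last 2 first.
  exact: ltW.
  by rewrite addr_ge0 // invr_ge0 ltW.
have -> : m `^ q = m `^ (q - 1) * m.
  have h := @powRD R m (q - 1) 1; rewrite subrK powRr1 in h; last exact: ltW.
  by apply: h; rewrite lt0r_neq0 // implybT.
have mq : m `^ (q - 1) != 0 by rewrite lt0r_neq0 // powR_gt0.
field => //.
Unshelve. end_near. Qed.

Lemma powq_inv0 (q : R) : 0 < q -> (fun n : nat => (n%:R `^ q)^-1) @ \oo --> (0:R).
Proof.
move=> q0; rewrite -cvg_shiftS.
have := cvg_comp _ _ harm_right (powR_cvg0 q0).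
apply: cvg_trans; apply: near_eq_cvg; near=> n => /=.
by rewrite -powRN -(mulN1r q) powRrM powR_inv1.
Unshelve. end_near. Qed.

Lemma WC0 (x : nat -> R) (r l : R) : -1 < r ->
  (fun n => x n / n%:R `^ r) @ \oo --> l ->
  (fun n => (\sum_(i < n) x i) / n%:R `^ (r+1)) @ \oo --> l/(r+1).
Proof.
move=> r1 hx.
have q0 : 0 < r + 1 by rewrite -ltrBlDr sub0r.
apply: (@stolz (fun n => \sum_(i < n) x i) (fun n => n%:R `^ (r+1))).
- by move=> n; exact: powR_ge0.
- by move=> n; apply: gt0_ltr_powR => //; rewrite ?nnegrE ?ler0n // ltr_nat.
- exact: powq_inv0.
have L := L2 (r + 1); rewrite addrK in L.
apply: cvg_trans (cvgM hx (cvgV (lt0r_neq0 q0) L)); apply: near_eq_cvg; near=> n => /=.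
have n0 : (0 < n)%N by near: n; exact: nbhs_infty_ge.
have nr : n%:R `^ r != 0 by rewrite lt0r_neq0 // powR_gt0 // ltr0n.
have w0 : n.+1%:R `^ (r+1) - n%:R `^ (r+1) != 0.
  by rewrite subr_eq0 gt_eqF // gt0_ltr_powR // ?nnegrE ?ler0n // ltr_nat.
rewrite big_ord_recr /= addrC addrK invf_div.
by rewrite mulrA mulfVK.
Unshelve. end_near. Qed.

Lemma WC (x : nat -> R) (r l : R) : -1 < r ->
  (fun n => x n / n%:R `^ r) @ \oo --> l ->
  (fun n => (\sum_(i < n.+1) x i) / n%:R `^ (r+1)) @ \oo --> l/(r+1).
Proof.
move=> r1 hx.
have -> : l / (r + 1) = l / (r + 1) + l * 0 by rewrite mulr0 addr0.
apply: cvg_trans (cvgD (WC0 _ _ _ r1 hx) (cvgM hx inv_cvg0)); apply: near_eq_cvg; near=> n => /=.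
have n0 : (0 < n)%N by near: n; exact: nbhs_infty_ge.
have nr : n%:R `^ r != 0 by rewrite lt0r_neq0 // powR_gt0 // ltr0n.
have nn : n%:R != 0 :> R by rewrite pnatr_eq0 -lt0n.
have E : n%:R `^ (r + 1) = n%:R `^ r * n%:R :> R.
  by rewrite powRD ?powRr1 ?ler0n // nn implybT.
rewrite !fctE E big_ord_recr /=.
by field; rewrite nn nr.
Unshelve. end_near. Qed.

Lemma powk_div (k : nat) (e : R) : k%:R < e ->
  (fun n : nat => n%:R ^+ k / n%:R `^ e) @ \oo --> (0:R).
Proof.
move=> ke; have q0 : 0 < e - k%:R by rewrite subr_gt0.
apply: cvg_trans (powq_inv0 _ q0); apply: near_eq_cvg; near=> n => /=.
have n0 : (0 < n)%N by near: n; exact: nbhs_infty_ge.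
have nn : n%:R != 0 :> R by rewrite pnatr_eq0 -lt0n.
by rewrite powRB ?nn ?implybT // invf_div powR_mulrn // ler0n.
Unshelve. end_near. Qed.

Lemma assemble (lam y : nat -> R) (M e Ly c0 : R) (j : nat) : 0 < e ->
  (fun n => lam n / n%:R `^ e) @ \oo --> (0:R) ->
  (fun n => (\sum_(i < n.+1) y i) / n%:R `^ e) @ \oo --> Ly ->
  (fun n => (lam n + M * (if (n <= j)%N then 0 else \sum_(i < n.+1) y i - c0)) / n%:R `^ e)
    @ \oo --> M * Ly.
Proof.
move=> e0 hl hy.
have -> : M * Ly = 0 + (M * Ly - M * c0 * 0) by rewrite mulr0 subr0 add0r.
apply: cvg_trans (cvgD hl (cvgB (cvgMl_tmp hy) (cvgMl_tmp (powq_inv0 _ e0)))).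
apply: near_eq_cvg; near=> n => /=.
have hj : (j < n)%N by near: n; exact: nbhs_infty_gt.
rewrite leqNgt hj /=.
have n0 : (0 < n)%N by apply: leq_ltn_trans hj.
have nq : n%:R `^ e != 0 by rewrite lt0r_neq0 // powR_gt0 // ltr0n.
rewrite !fctE /=.
by field.
Unshelve. end_near. Qed.
End S.

Theorem theorem1 (R : realType) (w : R -> R) (D : set R)
  (sigma tau : {poly R}) (c : R) (p : nat -> {poly R}) (lam : nat -> R)
  (j : nat) (M : R) (a b gamma delta : R) (C : nat -> R) :
  classical_setting w D sigma tau c ->
  orthonormal_family w D p ->
  (forall n, sigma * (p n)^`(2) + tau * (p n)^`() = lam n *: p n) ->
  0 < M ->
  (forall k : nat,
     asymp_eq (fun n => ((p n)^`(k)).[c])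
              (fun n => C k * (-1) ^+ n * (n%:R `^ (a * k%:R + b)))) ->
  (forall k : nat, 0 < 2 * (a * k%:R + b) + 1) ->
  (forall n : nat, lam n = gamma * n%:R ^+ 2 + delta * n%:R) ->
  (gamma != 0 ->
     (fun n => lambda_tilde p lam M j c n / n%:R `^ (2 * (a * j%:R + b) + 3))
       @ \oo --> 2 * gamma * M * C j ^+ 2
                 / ((2 * (a * j%:R + b) + 3) * (2 * (a * j%:R + b) + 1)))
  /\
  (gamma = 0 ->
     (fun n => lambda_tilde p lam M j c n / n%:R `^ (2 * (a * j%:R + b + 1)))
       @ \oo --> delta * M * C j ^+ 2
                 / (2 * (a * j%:R + b + 1) * (2 * (a * j%:R + b) + 1))).
Proof.
move=> _ _ _ M0 Hasy Hpos Hlam.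
have s1 := Hpos j.
set s := a * j%:R + b in s1 *.
pose u n := ((p n)^`(j)).[c].
have HA := Hasy j; rewrite /asymp_eq in HA.
have Cj : C j != 0.
  apply/negP => /eqP C0; move: HA; rewrite C0.
  have -> : (fun n => ((p n)^`(j)).[c] / (0 * (-1) ^+ n * n%:R `^ (a * j%:R + b)))
     = (fun _ => 0) by apply/funext => n; rewrite !mul0r invr0 mulr0.
  move=> HA0; have sep : hausdorff_space R^o := @norm_hausdorff _ R^o.
  have := cvg_lim sep HA0; rewrite (lim_cst sep) => h.
  by have := @oner_neq0 R; rewrite -h eqxx.
have Hx : (fun m => u m ^+ 2 / m%:R `^ (2 * s)) @ \oo --> C j ^+ 2.
  have -> : C j ^+ 2 = 1 * 1 * C j ^+ 2 by rewrite !mul1r.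
  apply: cvg_trans (cvgM (cvgM HA HA) (cvg_cst (C j ^+ 2))).
  apply: near_eq_cvg; near=> m => /=.
  have m0 : (0 < m)%N by near: m; exact: nbhs_infty_ge.
  have ms : m%:R `^ s != 0 by rewrite lt0r_neq0 // powR_gt0 // ltr0n.
  have sn : (-1) ^+ m != 0 :> R by rewrite expf_neq0 // oppr_eq0 oner_eq0.
  have hv : (-1) ^+ m * (-1) ^+ m = 1 :> R by rewrite -expr2 -exprM mulnC exprM sqrrN expr1n expr1n.
  rewrite /= -/s.
  have -> : m%:R `^ (2 * s) = (m%:R `^ s) ^+ 2 :> R by rewrite mulrC powRrM powR_mulrn // powR_ge0.
  have -> : u m ^+ 2 / (m%:R `^ s) ^+ 2 = u m ^+ 2 / ((m%:R `^ s) ^+ 2 * ((-1) ^+ m * (-1) ^+ m)) by rewrite hv mulr1.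
  rewrite /u; field.
  by rewrite Cj sn ms.
Unshelve. all: end_near.
have r1 : -1 < 2 * s by lra.
have HK : (fun i => Kjj p j c i.-1 / i%:R `^ (2 * s + 1)) @ \oo --> C j ^+ 2 / (2 * s + 1).
  apply: cvg_trans (WC0 _ _ _ _ r1 Hx); apply: near_eq_cvg; near=> i => /=.
  have i0 : (0 < i)%N by near: i; exact: nbhs_infty_ge.
  by rewrite /Kjj prednK.
pose y i := (lam i - lam i.-1) * Kjj p j c i.-1.
have alphaE : forall n, (j < n)%N ->
    alphaS p lam j c n = \sum_(i < n.+1) y i - \sum_(i < j.+1) y i.
  move=> n hn; rewrite /alphaS leqNgt hn /=.
  rewrite -!(big_mkord xpredT) [in RHS](@big_cat_nat _ _ _ j.+1 0 n.+1) //=; last exact: leqW.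
  by rewrite addrAC subrr add0r.
have LT : lambda_tilde p lam M j c = fun n =>
    lam n + M * (if (n <= j)%N then 0 else \sum_(i < n.+1) y i - \sum_(i < j.+1) y i).
  apply/funext => n; rewrite /lambda_tilde; case: leqP => h.
    by rewrite /alphaS h.
  by rewrite alphaE.
rewrite LT.
have ei : forall i, (0 < i)%N -> i%:R = i.-1%:R + 1 :> R.
  by move=> i i0; rewrite natr1 prednK.
split.
- move=> g0.
  have Hd : (fun i => (lam i - lam i.-1) / i%:R) @ \oo --> 2 * gamma.
    have -> : 2 * gamma = 2 * gamma + (delta - gamma) * 0 by rewrite mulr0 addr0.
    apply: cvg_trans (cvgD (cvg_cst _) (cvgMl_tmp (inv_cvg0 R))).
    apply: near_eq_cvg; near=> i => /=.
    have i0 : (0 < i)%N by near: i; exact: nbhs_infty_ge.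
    have nn : i%:R != 0 :> R by rewrite pnatr_eq0 -lt0n.
    rewrite !Hlam; move: nn; rewrite [i%:R](ei i i0) => nn.
    by rewrite fctE /= (ei i i0); field.
  have Hy : (fun i => y i / i%:R `^ (2 * s + 1 + 1)) @ \oo
      --> 2 * gamma * (C j ^+ 2 / (2 * s + 1)).
    apply: cvg_trans (cvgM Hd HK); apply: near_eq_cvg; near=> i => /=.
    have i0 : (0 < i)%N by near: i; exact: nbhs_infty_ge.
    have nn : i%:R != 0 :> R by rewrite pnatr_eq0 -lt0n.
    have nr : i%:R `^ (2 * s + 1) != 0 by rewrite lt0r_neq0 // powR_gt0 // ltr0n.
    have E : i%:R `^ (2 * s + 1 + 1) = i%:R `^ (2 * s + 1) * i%:R :> R.
      by rewrite powRD ?powRr1 ?ler0n // nn implybT.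
    rewrite E /y.
    by field; rewrite nn nr.
  have r2 : -1 < 2 * s + 1 + 1 by lra.
  have HS := WC _ _ _ _ r2 Hy.
  have e0 : 0 < 2 * s + 1 + 1 + 1 by lra.
  have Hl : (fun n => lam n / n%:R `^ (2 * s + 1 + 1 + 1)) @ \oo --> (0:R).
    have -> : (0:R) = gamma * 0 + delta * 0 by rewrite !mulr0 addr0.
    have k2 : (2%:R : R) < 2 * s + 1 + 1 + 1 by lra.
    have k1 : (1%:R : R) < 2 * s + 1 + 1 + 1 by lra.
    apply: cvg_trans (cvgD (cvgMl_tmp (powk_div _ _ _ k2)) (cvgMl_tmp (powk_div _ _ _ k1))).
    apply: near_eq_cvg; near=> n => /=.
    rewrite Hlam fctE /= expr1; ring.
  have := assemble _ _ _ M _ _ (\sum_(i < j.+1) y i) j e0 Hl HS.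
  have -> : 2 * gamma * M * C j ^+ 2 / ((2 * s + 3) * (2 * s + 1)) =
     M * (2 * gamma * (C j ^+ 2 / (2 * s + 1)) / (2 * s + 1 + 1 + 1)).
    have h3 : 2 * s + 3 != 0 by rewrite lt0r_neq0 //; lra.
    have h1 : 2 * s + 1 != 0 by rewrite lt0r_neq0.
    have -> : 2 * s + 1 + 1 + 1 = 2 * s + 3 by ring.
    by field; rewrite h3 h1.
  by have -> : 2 * s + 1 + 1 + 1 = 2 * s + 3 by ring.
- move=> g0.
  have Hy : (fun i => y i / i%:R `^ (2 * s + 1)) @ \oo --> delta * (C j ^+ 2 / (2 * s + 1)).
    apply: cvg_trans (cvgMl_tmp HK); apply: near_eq_cvg; near=> i => /=.
    have i0 : (0 < i)%N by near: i; exact: nbhs_infty_ge.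
    have nr : i%:R `^ (2 * s + 1) != 0 by rewrite lt0r_neq0 // powR_gt0 // ltr0n.
    rewrite /y !Hlam g0 (ei i i0).
    by field.
  have r2 : -1 < 2 * s + 1 by lra.
  have HS := WC _ _ _ _ r2 Hy.
  have e0 : 0 < 2 * s + 1 + 1 by lra.
  have Hl : (fun n => lam n / n%:R `^ (2 * s + 1 + 1)) @ \oo --> (0:R).
    have -> : (0:R) = delta * 0 by rewrite !mulr0.
    have k1 : (1%:R : R) < 2 * s + 1 + 1 by lra.
    apply: cvg_trans (cvgMl_tmp (powk_div _ _ _ k1)).
    apply: near_eq_cvg; near=> n => /=.
    by rewrite Hlam g0 mul0r add0r expr1 mulrA.
  have := assemble _ _ _ M _ _ (\sum_(i < j.+1) y i) j e0 Hl HS.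
  have -> : delta * M * C j ^+ 2 / (2 * (s + 1) * (2 * s + 1)) =
     M * (delta * (C j ^+ 2 / (2 * s + 1)) / (2 * s + 1 + 1)).
    have h3 : 2 * (s + 1) != 0 by rewrite lt0r_neq0 //; lra.
    have h1 : 2 * s + 1 != 0 by rewrite lt0r_neq0.
    have -> : 2 * s + 1 + 1 = 2 * (s + 1) by ring.
    have hs : s + 1 != 0 by rewrite lt0r_neq0 //; lra.
    by field; rewrite hs h1.
  by have -> : 2 * s + 1 + 1 = 2 * (s + 1) by ring.
Unshelve. all: end_near.
Qed.
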